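(* Let $P,Q\in\mathbb R[X]$ be real polynomials such that all (complex) roots of $P$ are real (respectively, all roots of $P$ lie in $\mathbb R_{\ge0}$). If there exists $c>0$ such that $|Q(t)|\le c|P(t)|$ for all $t\in\mathbb R$ (respectively, for all $t\in\mathbb R_{\ge0}$), then $Q=\kappa P$ for some $\kappa\in\mathbb R$. Moreover, if $\deg Q<\deg P$, then $Q=0$. *)

(* Defs.v *)
From mathcomp Require Import all_boot all_order all_algebra.
From mathcomp Require Import reals complex.
Set Implicit Arguments. Unset Strict Implicit. Unset Printing Implicit Defensive.
Import Order.TTheory GRing.Theory Num.Theory.
Local Open Scope ring_scope.

Definition all_roots_real (R : realType) (P : {poly R}) : Prop :=
  forall z : R[i], root (map_poly (real_complex R) P) z -> Im z = 0.

Definition all_roots_nonneg (R : realType) (P : {poly R}) : Prop :=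
  forall z : R[i], root (map_poly (real_complex R) P) z -> Im z = 0 /\ 0 <= Re z.

(* Main.v *)
Require Import Defs.
From mathcomp Require Import all_boot all_order all_algebra.
From mathcomp Require Import reals complex polyrcf.
From mathcomp Require Import lra.
Import Order.TTheory GRing.Theory Num.Theory.
Local Open Scope ring_scope.

Section S.
Variable R : realType.
Implicit Types P Q : {poly R}.

Lemma closure_pt P Q c a : 0 < c ->
  (forall y, a < y -> `|Q.[y]| <= c * `|P.[y]|) -> `|Q.[a]| <= c * `|P.[a]|.
Proof.
move=> c0 H; rewrite leNgt; apply/negP => Hlt.
set g := `|Q.[a]| - c * `|P.[a]|.
have g0 : 0 < g by rewrite subr_gt0.
have g20 : 0 < g / 2 by rewrite divr_gt0.
have [d1 d10 H1] := poly_cont a Q g20.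
have [d2 d20 H2] := poly_cont a P (divr_gt0 g20 c0).
set d := Num.min d1 d2.
have d0 : 0 < d by rewrite lt_min d10 d20.
have d20' : 0 < d / 2 by rewrite divr_gt0.
have dy : `|(a + d / 2) - a| < d.
  rewrite addrC addKr ger0_norm ?ltW //.
  by rewrite ltr_pdivrMr ?ltr0n // ltr_pMr ?ltr1n.
have Hy := H (a + d/2) _; rewrite ltrDl d20' in Hy; have {}Hy := Hy isT.
have dd1 : d <= d1 by rewrite ge_min lexx.
have dd2 : d <= d2 by rewrite ge_min lexx orbT.
have h1 := H1 _ (lt_le_trans dy dd1).
have h2 := H2 _ (lt_le_trans dy dd2).
have k1 := le_lt_trans (ler_dist_dist _ _) h1.
have k2 := le_lt_trans (ler_dist_dist _ _) h2.
move: k1 k2; rewrite !ltr_distl => /andP[k1 _] /andP[_ k2].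
have k3 : c * `|P.[a + d / 2]| < c * (`|P.[a]| + g / 2 / c) by rewrite ltr_pM2l.
move: k3; rewrite mulrDr mulrCA divff ?gt_eqF // mulr1 /g => k3.
clear -Hy k1 k3 Hlt c0. rewrite /g in k1 k3 *. move: Hy k1 k3 Hlt. set u := `|Q.[_]|. set v := `|Q.[a]|. set w := `|P.[_]|. set x := `|P.[a]|. set p := c * w. set q := c * x. move=> *. lra.
Qed.

Lemma divides (D : R -> Prop) (Dup : forall x y, D x -> x <= y -> D y) c (c0 : 0 < c) :
  forall n P Q, (size P <= n)%N -> P != 0 ->
  (forall z : R[i], root (map_poly (real_complex R) P) z -> complex.Im z = 0 /\ D (complex.Re z)) ->
  (forall t, D t -> `|Q.[t]| <= c * `|P.[t]|) -> exists S, Q = S * P.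
Proof.
elim=> [|n IH] P Q.
  by rewrite leqn0 size_poly_eq0 => /eqP ->; rewrite eqxx.
move=> sP P0 Hr HQ.
have [/eqP sP1|sP1] := eqVneq (size P) 1.
  have [p Pp] : exists p, P = p%:P by exists (P`_0); apply: size1_polyC; rewrite (eqP sP1).
  have p0 : p != 0 by move: P0; rewrite Pp polyC_eq0.
  exists (Q * (p^-1)%:P); by rewrite Pp -mulrA -polyCM mulVf // mulr1.
have : size (map_poly (real_complex R) P) != 1 by rewrite size_map_poly.
move=> /closed_rootP [z rz].
have [Iz Dz] := Hr z rz.
set a := complex.Re z.
have za : z = real_complex R a by case: z rz Iz Dz @a => x y /= _ -> _.
have rPa : root P a.
  move: rz; rewrite za /root horner_map /= => /eqP H0; apply/eqP.
  by apply: complexI; rewrite H0.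
have rQa : root Q a.
  have := HQ a Dz; move/rootP: rPa => ->; rewrite normr0 mulr0 normr_le0 => H0.
  exact/rootP/eqP.
have [P1 EP] := factor_theorem _ _ rPa.
have [Q1 EQ] := factor_theorem _ _ rQa.
have P10 : P1 != 0 by move: P0; rewrite EP; apply: contraNneq => ->; rewrite mul0r.
have sP1' : (size P1 <= n)%N.
  by move: sP; rewrite EP size_Mmonic ?monicXsubC // size_XsubC addn2 /= ltnS.
have HQ1 : forall t, D t -> `|Q1.[t]| <= c * `|P1.[t]|.
  have off : forall t, D t -> t != a -> `|Q1.[t]| <= c * `|P1.[t]|.
    move=> t Dt ta; have := HQ t Dt.
    rewrite EP EQ !hornerM !hornerXsubC !normrM mulrA.
    by rewrite ler_pM2r // normr_gt0 subr_eq0.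
  move=> t Dt; have [->|ta] := eqVneq t a; last exact: off.
  apply: closure_pt => // y ay; apply: off.
    exact: (Dup _ _ Dz (ltW ay)).
  by rewrite gt_eqF.
have Hr1 : forall z : R[i], root (map_poly (real_complex R) P1) z -> complex.Im z = 0 /\ D (complex.Re z).
  move=> w rw; apply: Hr; by rewrite EP rmorphM rootM rw.
have [S1 ES1] := IH P1 Q1 sP1' P10 Hr1 HQ1.
by exists S1; rewrite EQ EP ES1 mulrA.
Qed.

Lemma main_gen (D : R -> Prop) (Dup : forall x y, D x -> x <= y -> D y)
  (Dpos : forall x, 0 <= x -> D x) P Q :
  (forall z : R[i], root (map_poly (real_complex R) P) z -> complex.Im z = 0 /\ D (complex.Re z)) ->
  P != 0 ->
  (exists2 c, 0 < c & forall t, D t -> `|Q.[t]| <= c * `|P.[t]|) ->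
  (exists kappa : R, Q = kappa *: P) /\ ((size Q < size P)%N -> Q = 0).
Proof.
move=> Hr P0 [c c0 HQ].
have [S ES] := @divides D Dup c c0 _ _ _ (leqnn (size P)) P0 Hr HQ.
have sS : (size S <= 1)%N.
  rewrite leqNgt; apply/negP => sS.
  have S0 : S != 0 by rewrite -size_poly_gt0 (ltn_trans _ sS).
  have [n1 Hn1] : exists n1, forall x, n1 <= x -> c < `|S.[x]|.
    have : lead_coef S != 0 by rewrite lead_coef_eq0.
    case: (ltrgtP (lead_coef S) 0) => // lc _.
      have lc' : 0 < lead_coef (- S) by rewrite lead_coefN oppr_gt0.
      have sS' : (1 < size (- S))%N by rewrite size_polyN.
      have [n1 Hn1] := poly_lim_infty (c + 1) lc' sS'.
      exists n1 => x /Hn1; rewrite hornerN => h.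
      rewrite -normrN; apply: lt_le_trans (ler_norm _).
      by apply: lt_le_trans h; rewrite ltrDl.
    have [n1 Hn1] := poly_lim_infty (c + 1) lc sS.
    exists n1 => x /Hn1 h.
    apply: lt_le_trans (ler_norm _).
    by apply: lt_le_trans h; rewrite ltrDl.
  set x := Num.max n1 (Num.max (cauchy_bound P) 0).
  have x0 : 0 <= x by rewrite le_max le_max lexx !orbT.
  have xc : cauchy_bound P <= x by rewrite le_max le_max lexx orbT.
  have Px : ~~ root P x by apply: ge_cauchy_bound => //; rewrite in_itv /= xc.
  have := HQ x (Dpos x x0); rewrite ES hornerM normrM ler_pM2r; last first.
    by rewrite normr_gt0.
  by rewrite leNgt Hn1 // le_max lexx.
have [k Ek] : exists k, S = k%:P by exists (S`_0); apply: size1_polyC.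
have EQ : Q = k *: P by rewrite ES Ek mul_polyC.
split; first by exists k.
move=> sQ; have [k0|k0] := eqVneq k 0; first by rewrite EQ k0 scale0r.
by move: sQ; rewrite EQ size_scale // ltnn.
Qed.

Lemma Pnz P (X : R[i] -> Prop) : (forall z : R[i], root (map_poly (real_complex R) P) z -> 'Im z = 0 /\ X z) -> P != 0.
Proof.
move=> H; apply/negP => /eqP P0.
have [] := H (Complex 0 1); first by rewrite P0 map_poly0 root0.
rewrite -complexIm /= => /(congr1 (@complex.Re R)) /= /eqP.
by rewrite oner_eq0.
Qed.

End S.

Theorem lemma8 (R : realType) :
  (forall P Q : {poly R},
     all_roots_real P ->
     (exists2 c : R, 0 < c & forall t : R, `|Q.[t]| <= c * `|P.[t]|) ->
     (exists kappa : R, Q = kappa *: P) /\ ((size Q < size P)%N -> Q = 0))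
  /\
  (forall P Q : {poly R},
     all_roots_nonneg P ->
     (exists2 c : R, 0 < c & forall t : R, 0 <= t -> `|Q.[t]| <= c * `|P.[t]|) ->
     (exists kappa : R, Q = kappa *: P) /\ ((size Q < size P)%N -> Q = 0)).
Proof.
have ImE (z : R[i]) : 'Im z = 0 -> complex.Im z = 0.
  by rewrite -complexIm => /(congr1 (@complex.Re R)).
split.
  move=> P Q Hr [c c0 H].
  have P0 : P != 0 by apply: (@Pnz _ P (fun _ => True)) => z /Hr.
  apply: (@main_gen R (fun _ => True)) => //.
    by move=> z /Hr /ImE.
  by exists c => // t _; apply: H.
move=> P Q Hr Hc.
have P0 : P != 0 by apply: (@Pnz _ P (fun z => 0 <= 'Re z)) => z /Hr.
apply: (@main_gen R (fun t => 0 <= t)) => //.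
- by move=> x y; apply: le_trans.
- move=> z /Hr [/ImE -> h]; split => //.
  by move: h; rewrite -complexRe ler0c.
Qed.
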